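(* Let $P=\{p_1,\dots,p_n\}$ be weighted points in $\mathbb{R}^2$ with total weight $1$, let $S=\{s_1,\dots,s_m\}$ be triangles in $\mathbb{R}^2$ of total area $1$ with longest edge length $\Delta$, let $\delta>0$, and let $Q$ be the set of cells produced by the subdivision described in the context. Then $|Q|=O\!\left(\frac{nm}{\delta^2}\log\frac{nm\Delta}{\delta}\right)$.
   Context: Subdivision: overlay a uniform grid of $\Delta\times\Delta$ square cells and keep the cells that intersect a triangle of $S$. Recursively process each cell: if there is a point of $P$ such that the whole cell lies within Euclidean distance $\delta/\sqrt{nm}$ of it, stop; otherwise, if for some point of $P$ the ratio of the distances to the furthest and closest point of the cell exceeds $1+\delta$, split the cell into four equal squares and recurse; otherwise stop. $Q$ is the set of resulting cells. *)

(* Defs.v *)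
From Stdlib Require Import Reals Lra ZArith List.
Open Scope R_scope.

Definition pt : Type := (R * R)%type.

Definition dist (p q : pt) : R :=
  sqrt ((fst p - fst q) ^ 2 + (snd p - snd q) ^ 2).

Definition sumR (k : nat) (f : nat -> R) : R :=
  fold_right Rplus 0 (map f (seq 0 k)).

Definition tri : Type := (pt * pt * pt)%type.

Definition tA (t : tri) : pt := fst (fst t).
Definition tB (t : tri) : pt := snd (fst t).
Definition tC (t : tri) : pt := snd t.

Definition in_triangle (t : tri) (x : pt) : Prop :=
  exists a b c : R, 0 <= a /\ 0 <= b /\ 0 <= c /\ a + b + c = 1 /\
    fst x = a * fst (tA t) + b * fst (tB t) + c * fst (tC t) /\
    snd x = a * snd (tA t) + b * snd (tB t) + c * snd (tC t).

Definition tri_area (t : tri) : R :=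
  Rabs ((fst (tB t) - fst (tA t)) * (snd (tC t) - snd (tA t))
        - (snd (tB t) - snd (tA t)) * (fst (tC t) - fst (tA t))) / 2.

Definition longest_edge (t : tri) : R :=
  Rmax (dist (tA t) (tB t)) (Rmax (dist (tB t) (tC t)) (dist (tC t) (tA t))).

(* Dyadic cells: (k, a, b) denotes the closed square
   [a*s, (a+1)*s] x [b*s, (b+1)*s] with s = Delta / 2^k.
   Depth 0 cells are the cells of the uniform Delta x Delta grid
   (aligned with the origin); the four children of (k,a,b) are
   (k+1, 2a+e, 2b+f), e,f in {0,1}. *)
Definition cell : Type := (nat * Z * Z)%type.

Definition cdepth (c : cell) : nat := fst (fst c).
Definition cx (c : cell) : Z := snd (fst c).
Definition cy (c : cell) : Z := snd c.

Definition cside (Delta : R) (c : cell) : R := Delta / 2 ^ (cdepth c).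

Definition in_cell (Delta : R) (c : cell) (x : pt) : Prop :=
  IZR (cx c) * cside Delta c <= fst x <= (IZR (cx c) + 1) * cside Delta c /\
  IZR (cy c) * cside Delta c <= snd x <= (IZR (cy c) + 1) * cside Delta c.

(* the ancestor of c that is j levels up (j <= depth c) *)
Definition ancestor (c : cell) (j : nat) : cell :=
  ((cdepth c - j)%nat, (cx c / 2 ^ Z.of_nat j)%Z, (cy c / 2 ^ Z.of_nat j)%Z).

Definition near_stop (n m : nat) (P : nat -> pt) (delta Delta : R) (c : cell) : Prop :=
  exists i, (i < n)%nat /\
    forall x, in_cell Delta c x -> dist x (P i) <= delta / sqrt (INR n * INR m).

(* For some point p of P, (furthest distance from p to the cell) exceeds
   (1+delta) * (closest distance from p to the cell).  Since the cell is a
   closed square these extrema are attained, so this says that some point y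
   of the cell is more than (1+delta) times further from p than some point x. *)
Definition ratio_big (n : nat) (P : nat -> pt) (delta Delta : R) (c : cell) : Prop :=
  exists i, (i < n)%nat /\
    exists x y, in_cell Delta c x /\ in_cell Delta c y /\
      dist y (P i) > (1 + delta) * dist x (P i).

Definition splits (n m : nat) (P : nat -> pt) (delta Delta : R) (c : cell) : Prop :=
  ~ near_stop n m P delta Delta c /\ ratio_big n P delta Delta c.

Definition kept (m : nat) (S : nat -> tri) (Delta : R) (c : cell) : Prop :=
  cdepth c = 0%nat /\
  exists t x, (t < m)%nat /\ in_triangle (S t) x /\ in_cell Delta c x.

(* c is a resulting cell of the subdivision (a leaf of the recursion) *)
Definition inQ (n m : nat) (P : nat -> pt) (S : nat -> tri) (delta Delta : R)
  (c : cell) : Prop :=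
  kept m S Delta (ancestor c (cdepth c)) /\
  (forall j, (1 <= j <= cdepth c)%nat -> splits n m P delta Delta (ancestor c j)) /\
  ~ splits n m P delta Delta c.

(* Main.v *)
Require Import Defs.
From Stdlib Require Import Reals List Lra Lia ZArith Classical.
Open Scope R_scope.

Lemma dist_sym p q : Defs.dist p q = Defs.dist q p.
Proof. unfold Defs.dist. f_equal. ring. Qed.

Lemma abs_le_sqrt a b : Rabs a <= sqrt (a^2 + b^2).
Proof.
  rewrite <- sqrt_Rsqr_abs. apply sqrt_le_1_alt. unfold Rsqr. nra.
Qed.

Lemma sqrt_le_abs_sum a b : sqrt (a^2 + b^2) <= Rabs a + Rabs b.
Proof.
  pose proof (Rabs_pos a); pose proof (Rabs_pos b).
  rewrite <- (sqrt_pow2 (Rabs a + Rabs b)) by lra.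
  apply sqrt_le_1_alt.
  rewrite <- (pow2_abs a), <- (pow2_abs b). nra.
Qed.

Lemma minkowski a b c d : sqrt ((a+c)^2 + (b+d)^2) <= sqrt (a^2+b^2) + sqrt (c^2+d^2).
Proof.
  assert (HA := sqrt_pos (a^2+b^2)). assert (HB := sqrt_pos (c^2+d^2)).
  rewrite <- (sqrt_pow2 (sqrt (a^2+b^2) + sqrt (c^2+d^2))) by lra.
  apply sqrt_le_1_alt.
  assert (E1 : sqrt (a^2+b^2) * sqrt (a^2+b^2) = a^2+b^2) by (apply sqrt_sqrt; nra).
  assert (E2 : sqrt (c^2+d^2) * sqrt (c^2+d^2) = c^2+d^2) by (apply sqrt_sqrt; nra).
  assert (E3 : a*c + b*d <= sqrt (a^2+b^2) * sqrt (c^2+d^2)).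
  { rewrite <- sqrt_mult by nra.
    destruct (Rle_or_lt (a*c+b*d) 0).
    { pose proof (sqrt_pos ((a^2+b^2)*(c^2+d^2))); lra. }
    rewrite <- (sqrt_pow2 (a*c+b*d)) by lra. apply sqrt_le_1_alt.
    pose proof (pow2_ge_0 (a*d - b*c)). nra. }
  nra.
Qed.

Lemma dist_tri p q r : Defs.dist p r <= Defs.dist p q + Defs.dist q r.
Proof.
  unfold Defs.dist.
  replace (fst p - fst r) with ((fst p - fst q) + (fst q - fst r)) by ring.
  replace (snd p - snd r) with ((snd p - snd q) + (snd q - snd r)) by ring.
  apply minkowski.
Qed.

Lemma cell_diam D c x y : in_cell D c x -> in_cell D c y -> Defs.dist x y <= 2 * cside D c.
Proof.
  unfold in_cell; intros [[H1 H2] [H3 H4]] [[H5 H6] [H7 H8]].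
  unfold Defs.dist. eapply Rle_trans; [apply sqrt_le_abs_sum|].
  assert (Rabs (fst x - fst y) <= cside D c) by (apply Rabs_le; split; lra).
  assert (Rabs (snd x - snd y) <= cside D c) by (apply Rabs_le; split; lra).
  lra.
Qed.

Lemma sumR_le (l : list nat) f M : (forall t, In t l -> f t <= M) ->
  fold_right Rplus 0 (map f l) <= INR (length l) * M.
Proof.
  induction l as [|a l IH]; intros H; cbn [length map fold_right].
  - simpl; lra.
  - rewrite S_INR. assert (f a <= M) by (apply H; now left).
    assert (fold_right Rplus 0 (map f l) <= INR (length l) * M) by (apply IH; intros; apply H; now right).
    lra.
Qed.

Lemma length_flat_map {A B} (f : A -> list B) k l :
  (forall x, length (f x) = k) -> length (flat_map f l) = (length l * k)%nat.
Proof.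
  intros H; induction l; simpl; auto. rewrite length_app, H, IHl. lia.
Qed.

Definition rng (u : R) (K : nat) : list Z :=
  map (fun k => (up u - 1 + Z.of_nat k)%Z) (seq 0 K).

Lemma rng_len u K : length (rng u K) = K.
Proof. unfold rng. now rewrite length_map, length_seq. Qed.

Lemma rng_in u K a : u <= IZR a -> IZR a <= u + INR K - 1 -> In a (rng u K).
Proof.
  intros H1 H2. destruct (archimed u) as [A1 A2].
  unfold rng. apply in_map_iff. exists (Z.to_nat (a - (up u - 1))).
  assert (h1 : (up u - 1 <= a)%Z).
  { apply le_IZR. rewrite minus_IZR. simpl. lra. }
  assert (h2 : (a < up u - 1 + Z.of_nat K)%Z).
  { apply lt_IZR. rewrite plus_IZR, minus_IZR, <- INR_IZR_INZ. simpl. lra. }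
  split. { rewrite Z2Nat.id by lia. lia. }
  apply in_seq. lia.
Qed.

Lemma split_info n m P delta D c : 0 < delta -> delta <= 1 ->
  splits n m P delta D c ->
  exists i, (i < n)%nat /\
    (forall z, in_cell D c z -> Defs.dist z (P i) < 4 * cside D c / delta) /\
    delta / sqrt (INR n * INR m) < 4 * cside D c / delta.
Proof.
  intros Hd0 Hd1 [Hns [i [Hi [x [y [Hx [Hy Hr]]]]]]].
  assert (Hxy := cell_diam D c x y Hx Hy).
  assert (Hyx := cell_diam D c y x Hy Hx).
  set (s := cside D c) in *.
  assert (Ht := dist_tri y x (P i)).
  assert (Hdx : 0 <= Defs.dist x (P i)) by (unfold Defs.dist; apply sqrt_pos).
  assert (Hdxy : 0 <= Defs.dist x y) by (unfold Defs.dist; apply sqrt_pos).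
  assert (Hs : 0 <= s) by lra.
  assert (H1 : delta * Defs.dist x (P i) < 2 * s) by nra.
  assert (H2 : 2 * s + Defs.dist x (P i) < 4 * s / delta).
  { assert (E: 4 * s / delta = (2*s)/delta + (2*s)/delta) by (field; lra).
    assert (Defs.dist x (P i) < 2*s/delta).
    { apply (Rmult_lt_reg_l delta); [lra|]. replace (delta * (2*s/delta)) with (2*s) by (field; lra). lra. }
    assert (2*s <= 2*s/delta).
    { apply (Rmult_le_reg_l delta); [lra|]. replace (delta * (2*s/delta)) with (2*s) by (field; lra). nra. }
    lra. }
  assert (Hz : forall z, in_cell D c z -> Defs.dist z (P i) < 4 * s / delta).
  { intros z Hz. assert (Hzx := cell_diam D c z x Hz Hx). fold s in Hzx.
    assert (Ht2 := dist_tri z x (P i)). lra. }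
  exists i. split; [exact Hi|]. split; [exact Hz|].
  destruct (classic (exists z, in_cell D c z /\ Defs.dist z (P i) > delta / sqrt (INR n * INR m))) as [[z [Hz1 Hz2]]|Hno].
  - specialize (Hz z Hz1). lra.
  - exfalso. apply Hns. exists i. split; [exact Hi|]. intros z Hz1.
    apply Rnot_gt_le. intros Hc. apply Hno. exists z. auto.
Qed.

Lemma tri_near t x D : longest_edge t <= D -> in_triangle t x ->
  Rabs (fst x - fst (tA t)) <= D /\ Rabs (snd x - snd (tA t)) <= D.
Proof.
  intros HL [al [be [ga [H1 [H2 [H3 [H4 [Hx Hy]]]]]]]].
  unfold longest_edge in HL.
  assert (HAB := Rmax_l (Defs.dist (tA t) (tB t)) (Rmax (Defs.dist (tB t) (tC t)) (Defs.dist (tC t) (tA t)))).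
  assert (HCA1 := Rmax_r (Defs.dist (tB t) (tC t)) (Defs.dist (tC t) (tA t))).
  assert (HCA2 := Rmax_r (Defs.dist (tA t) (tB t)) (Rmax (Defs.dist (tB t) (tC t)) (Defs.dist (tC t) (tA t)))).
  unfold Defs.dist in *.
  set (Ax := fst (tA t)) in *. set (Ay := snd (tA t)) in *.
  set (Bx := fst (tB t)) in *. set (By := snd (tB t)) in *.
  set (Cx := fst (tC t)) in *. set (Cy := snd (tC t)) in *.
  assert (E1 := abs_le_sqrt (Ax - Bx) (Ay - By)).
  assert (E2 := abs_le_sqrt (Ay - By) (Ax - Bx)).
  assert (E3 := abs_le_sqrt (Cx - Ax) (Cy - Ay)).
  assert (E4 := abs_le_sqrt (Cy - Ay) (Cx - Ax)).
  rewrite Rplus_comm in E2, E4.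
  rewrite Rabs_minus_sym in E1, E2.
  assert (K1 : Rabs (Bx - Ax) <= D) by lra.
  assert (K2 : Rabs (By - Ay) <= D) by lra.
  assert (K3 : Rabs (Cx - Ax) <= D) by lra.
  assert (K4 : Rabs (Cy - Ay) <= D) by lra.
  assert (HD0 : 0 <= D) by (pose proof (Rabs_pos (Bx - Ax)); lra).
  assert (HD1 : 0 <= (1 - be - ga) * D) by (apply Rmult_le_pos; lra).
  assert (al = 1 - be - ga) by lra. subst al.
  assert (M1 : be * Rabs (Bx - Ax) <= be * D) by (apply Rmult_le_compat_l; lra).
  assert (M2 : be * Rabs (By - Ay) <= be * D) by (apply Rmult_le_compat_l; lra).
  assert (M3 : ga * Rabs (Cx - Ax) <= ga * D) by (apply Rmult_le_compat_l; lra).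
  assert (M4 : ga * Rabs (Cy - Ay) <= ga * D) by (apply Rmult_le_compat_l; lra).
  split.
  - replace (fst x - Ax) with (be * (Bx - Ax) + ga * (Cx - Ax)) by (rewrite Hx; ring).
    eapply Rle_trans; [apply Rabs_triang|]. rewrite !Rabs_mult, (Rabs_right be), (Rabs_right ga) by lra.
    lra.
  - replace (snd x - Ay) with (be * (By - Ay) + ga * (Cy - Ay)) by (rewrite Hy; ring).
    eapply Rle_trans; [apply Rabs_triang|]. rewrite !Rabs_mult, (Rabs_right be), (Rabs_right ga) by lra.
    lra.
Qed.

Lemma sqrt_le_sq u D : 0 <= u -> sqrt u <= D -> u <= D^2.
Proof. intros H1 H2. rewrite <- (sqrt_sqrt u H1). pose proof (sqrt_pos u). nra. Qed.

Lemma tri_area_le t D : longest_edge t <= D -> tri_area t <= D^2 / 2.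
Proof.
  intros HL. unfold longest_edge in HL.
  assert (HAB := Rmax_l (Defs.dist (tA t) (tB t)) (Rmax (Defs.dist (tB t) (tC t)) (Defs.dist (tC t) (tA t)))).
  assert (HCA1 := Rmax_r (Defs.dist (tB t) (tC t)) (Defs.dist (tC t) (tA t))).
  assert (HCA2 := Rmax_r (Defs.dist (tA t) (tB t)) (Rmax (Defs.dist (tB t) (tC t)) (Defs.dist (tC t) (tA t)))).
  assert (HD : 0 <= D) by (pose proof (sqrt_pos ((fst (tA t) - fst (tB t)) ^ 2 + (snd (tA t) - snd (tB t)) ^ 2)); unfold Defs.dist in *; lra).
  unfold Defs.dist in *. unfold tri_area.
  set (Ax := fst (tA t)) in *. set (Ay := snd (tA t)) in *.
  set (Bx := fst (tB t)) in *. set (By := snd (tB t)) in *.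
  set (Cx := fst (tC t)) in *. set (Cy := snd (tC t)) in *.
  assert (F1 : (Ax - Bx)^2 + (Ay - By)^2 <= D^2) by (apply sqrt_le_sq; [apply Rplus_le_le_0_compat; apply pow2_ge_0|lra]).
  assert (F2 : (Cx - Ax)^2 + (Cy - Ay)^2 <= D^2) by (apply sqrt_le_sq; [apply Rplus_le_le_0_compat; apply pow2_ge_0|lra]).
  set (a := Bx - Ax). set (b := By - Ay). set (c := Cx - Ax). set (d := Cy - Ay).
  assert (G1 : a^2 + b^2 <= D^2) by (unfold a, b; nra).
  assert (G2 : c^2 + d^2 <= D^2) by (unfold c, d; nra).
  assert (G3 : (a*d - b*c)^2 <= (a^2+b^2)*(c^2+d^2)) by (pose proof (pow2_ge_0 (a*c+b*d)); nra).
  assert (G4 : (a*d - b*c)^2 <= D^2 * D^2).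
  { eapply Rle_trans; [exact G3|]. apply Rmult_le_compat; nra. }
  assert (Rabs (a*d - b*c) <= D^2).
  { destruct (Rle_or_lt (Rabs (a*d - b*c)) (D^2)); auto.
    rewrite <- (pow2_abs (a*d-b*c)) in G4. pose proof (Rabs_pos (a*d-b*c)). nra. }
  lra.
Qed.

Lemma coord_rng s q x K delta z : 0 < s -> 0 < delta -> q = IZR z ->
  Rabs (q * s - x) < 8 * s / delta -> 16 / delta <= INR K - 1 ->
  In z (rng (x / s - 8 / delta) K).
Proof.
  intros Hs Hd Hq Ha HK. subst q. apply Rabs_def2 in Ha. destruct Ha as [Ha1 Ha2].
  apply rng_in.
  - apply (Rmult_le_reg_r s); [lra|].
    replace ((x / s - 8 / delta) * s) with (x - 8 * s / delta) by (field; lra). lra.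
  - assert (IZR z <= x / s + 8 / delta).
    { apply (Rmult_le_reg_r s); [lra|].
      replace ((x / s + 8 / delta) * s) with (x + 8 * s / delta) by (field; lra). lra. }
    assert (16 / delta = 8 / delta + 8 / delta) by (field; lra). lra.
Qed.

Lemma root_rng D a xx Ax : 0 < D -> IZR a * D <= xx <= (IZR a + 1) * D ->
  Rabs (xx - Ax) <= D -> In a (rng (Ax / D - 2) 4).
Proof.
  intros HD [H1 H2] H3. assert (H4 := Rle_abs (xx - Ax)); assert (H5 := Rle_abs (- (xx - Ax))); rewrite Rabs_Ropp in H5.
  apply rng_in.
  - apply (Rmult_le_reg_r D); [lra|].
    replace ((Ax / D - 2) * D) with (Ax - 2 * D) by (field; lra). lra.
  - replace (Ax / D - 2 + INR 4 - 1) with (Ax / D + 1) by (simpl; ring).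
    apply (Rmult_le_reg_r D); [lra|].
    replace ((Ax / D + 1) * D) with (Ax + D) by (field; lra). lra.
Qed.

Lemma half_bounds a : 2 * IZR (a / 2) <= IZR a <= 2 * IZR (a / 2) + 1.
Proof.
  pose proof (Z.div_mod a 2 ltac:(lia)). pose proof (Z.mod_pos_bound a 2 ltac:(lia)).
  split.
  - rewrite <- mult_IZR. apply IZR_le. lia.
  - rewrite <- mult_IZR, <- plus_IZR. apply IZR_le. lia.
Qed.

Lemma anc1 D d a b : 0 <= D ->
  cdepth (ancestor ((S d, a, b) : cell) 1) = d /\
  cside D (ancestor ((S d, a, b) : cell) 1) = 2 * cside D ((S d, a, b) : cell) /\
  in_cell D (ancestor ((S d, a, b) : cell) 1)
    (IZR a * cside D ((S d, a, b) : cell), IZR b * cside D ((S d, a, b) : cell)).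
Proof.
  intros HD. unfold in_cell, ancestor, cside, cdepth, cx, cy; simpl.
  change (Z.pow_pos 2 1) with 2%Z.
  replace (d - 0)%nat with d by lia.
  assert (Hp : 0 < 2 ^ d) by (apply pow_lt; lra).
  set (s := D / (2 * 2 ^ d)).
  assert (Hs : 0 <= s) by (unfold s; apply Rmult_le_pos; [lra| left; apply Rinv_0_lt_compat; lra]).
  assert (E : D / 2 ^ d = 2 * s) by (unfold s; field; lra).
  rewrite E.
  pose proof (half_bounds a). pose proof (half_bounds b).
  repeat split; try reflexivity; nra.
Qed.

Theorem lemma9 :
  exists C : R, 0 < C /\
  forall (n m : nat) (P : nat -> pt) (w : nat -> R) (S : nat -> tri)
         (Delta delta : R),
    (forall i j, (i < n)%nat -> (j < n)%nat -> P i = P j -> i = j) ->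
    (forall i, (i < n)%nat -> 0 <= w i) ->
    sumR n w = 1 ->
    (forall i j, (i < m)%nat -> (j < m)%nat -> S i = S j -> i = j) ->
    sumR m (fun t => tri_area (S t)) = 1 ->
    (forall t, (t < m)%nat -> longest_edge (S t) <= Delta) ->
    (exists t, (t < m)%nat /\ longest_edge (S t) = Delta) ->
    0 < delta -> delta <= 1 ->
    forall l : list cell, NoDup l ->
      (forall c, In c l -> inQ n m P S delta Delta c) ->
      INR (length l) <=
        C * (INR n * INR m / delta ^ 2) * ln (INR n * INR m * Delta / delta).
Proof.
  exists 6000. split; [lra|].
  intros n m P w S Delta delta HPinj Hw Hsw HSinj Harea Hlong [t0 [Ht0 Hlt0]] Hd0 Hd1 l Hnd HQ.
  assert (Hn : (1 <= n)%nat) by (destruct n; [unfold sumR in Hsw; simpl in Hsw; lra| lia]).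
  assert (Hm : (1 <= m)%nat) by (destruct m; [unfold sumR in Harea; simpl in Harea; lra| lia]).
  assert (HN : 1 <= INR n) by (apply (le_INR 1); exact Hn).
  assert (HM : 1 <= INR m) by (apply (le_INR 1); exact Hm).
  assert (HD0 : 0 <= Delta).
  { rewrite <- Hlt0. unfold longest_edge. eapply Rle_trans; [|apply Rmax_l]. unfold Defs.dist; apply sqrt_pos. }
  assert (HmD : 2 <= INR m * Delta ^ 2).
  { assert (H := sumR_le (seq 0 m) (fun t => tri_area (S t)) (Delta^2/2)).
    rewrite length_seq in H. unfold sumR in Harea.
    assert (fold_right Rplus 0 (map (fun t => tri_area (S t)) (seq 0 m)) <= INR m * (Delta ^ 2 / 2)).
    { apply H. intros t Ht. apply in_seq in Ht. apply tri_area_le. apply Hlong. lia. }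
    lra. }
  assert (HD : 0 < Delta).
  { destruct HD0 as [|HD0]; auto. assert (INR m * Delta^2 = 0) by (rewrite <- HD0; ring). lra. }
  set (N := INR n) in *. set (M := INR m) in *.
  assert (HNMD : 1 <= N * M * Delta).
  { assert (1 <= (N * M * Delta)^2).
    { replace ((N*M*Delta)^2) with (N*N*M*(M*Delta^2)) by ring.
      assert (1 <= N*N*M) by (assert (1 <= N*N) by nra; nra). nra. }
    destruct (Rle_or_lt 1 (N*M*Delta)); auto.
    assert (0 <= N*M*Delta) by (apply Rmult_le_pos; [apply Rmult_le_pos|]; lra). nra. }
  set (X := N * M * Delta / delta).
  assert (HXd : X * delta = N * M * Delta) by (unfold X; field; lra).
  assert (HX1 : 1 <= X * delta) by lra.
  assert (HX2 : 2 <= X ^ 2).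
  { assert (2 <= (N*M*Delta)^2).
    { replace ((N*M*Delta)^2) with (N*N*M*(M*Delta^2)) by ring.
      assert (1 <= N*N*M) by (assert (1 <= N*N) by nra; nra). nra. }
    assert (X >= N*M*Delta) by nra. nra. }
  assert (HXpos : 0 < X) by nra.
  set (L := ln X).
  assert (HL2 : ln 2 <= 2 * L).
  { replace (2 * L) with (ln (X ^ 2)) by (unfold L; rewrite ln_pow by lra; simpl; ring).
    destruct HX2 as [HX2|HX2]; [left; apply ln_increasing; lra| rewrite HX2; lra]. }
  assert (Hln2 := ln_lt_2).
  assert (HL : 1 / 4 <= L) by lra.
  set (J := Z.to_nat (up (12 * L))).
  assert (HJ : INR J = IZR (up (12 * L))).
  { unfold J. rewrite INR_IZR_INZ, Z2Nat.id; [reflexivity|]. destruct (archimed (12 * L)) as [A1 _].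
    apply le_IZR. lra. }
  set (K := (Z.to_nat (up (16 / delta)) + 1)%nat).
  assert (HK : INR K = IZR (up (16 / delta)) + 1).
  { unfold K. rewrite plus_INR, INR_IZR_INZ, Z2Nat.id. { simpl; ring. }
    destruct (archimed (16 / delta)) as [A1 _].
    apply le_IZR. assert (0 < 16 / delta) by (apply Rdiv_lt_0_compat; lra). lra. }
  set (roots := flat_map (fun t => flat_map (fun a => map (fun b => ((0%nat, a, b) : cell))
                   (rng (snd (tA (S t)) / Delta - 2) 4)) (rng (fst (tA (S t)) / Delta - 2) 4)) (seq 0 m)).
  set (kids := flat_map (fun i => flat_map (fun d => flat_map (fun a => map (fun b => ((d, a, b) : cell))
                   (rng (snd (P i) / (Delta / 2 ^ d) - 8 / delta) K))
                   (rng (fst (P i) / (Delta / 2 ^ d) - 8 / delta) K)) (seq 1 J)) (seq 0 n)).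
  assert (Hlen : (length l <= m * (4 * 4) + n * (J * (K * K)))%nat).
  { replace (m * (4 * 4) + n * (J * (K * K)))%nat with (length (roots ++ kids)).
    2:{ rewrite length_app.
        assert (E1 : length roots = (m * (4 * 4))%nat).
        { unfold roots. rewrite (length_flat_map _ (4 * 4)), length_seq; [reflexivity|].
          intros t. rewrite (length_flat_map _ 4), rng_len; [reflexivity|].
          intros a. rewrite length_map, rng_len; reflexivity. }
        assert (E2 : length kids = (n * (J * (K * K)))%nat).
        { unfold kids. rewrite (length_flat_map _ (J * (K * K))), length_seq; [reflexivity|].
          intros i. rewrite (length_flat_map _ (K * K)), length_seq; [reflexivity|].
          intros d. rewrite (length_flat_map _ K), rng_len; [reflexivity|].
          intros a. rewrite length_map, rng_len; reflexivity. }
        rewrite E1, E2. reflexivity. }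
    apply NoDup_incl_length; auto.
    intros c Hc. apply in_or_app. destruct (HQ c Hc) as [Hkept [Hsp _]].
    destruct c as [[d a] b]. destruct d as [|d].
    - left. destruct Hkept as [_ [t [x [Ht [Htri Hcell]]]]].
      unfold ancestor, cdepth, cx, cy in Hcell; simpl in Hcell.
      rewrite !Z.div_1_r in Hcell.
      unfold in_cell, cside, cdepth, cx, cy in Hcell; simpl in Hcell.
      replace (Delta / 1) with Delta in Hcell by field.
      destruct (tri_near (S t) x Delta (Hlong t Ht) Htri) as [Nx Ny].
      destruct Hcell as [Cx Cy].
      unfold roots. apply in_flat_map. exists t. split; [apply in_seq; lia|].
      apply in_flat_map. exists a. split; [eapply root_rng; eauto|].
      apply in_map_iff. exists b. split; [reflexivity|]. eapply root_rng; eauto.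
    - right. assert (Hs1 := Hsp 1%nat ltac:(unfold cdepth; simpl; lia)).
      destruct (anc1 Delta d a b HD0) as [Hdep [Hside Hcorner]].
      destruct (split_info n m P delta Delta _ Hd0 Hd1 Hs1) as [i [Hi [Hnear Hdepth]]].
      rewrite Hside in Hnear, Hdepth. fold N M in Hdepth.
      set (s := cside Delta ((Datatypes.S d, a, b) : cell)) in *.
      assert (Hpw : 0 < 2 ^ d) by (apply pow_lt; lra).
      assert (Hs : s = Delta / (2 * 2 ^ d)) by reflexivity.
      assert (Hspos : 0 < s) by (rewrite Hs; apply Rdiv_lt_0_compat; lra).
      assert (Hdl : INR d < 12 * L).
      { set (sq := sqrt (N * M)) in *.
        assert (Hsq0 : 0 < sq) by (apply sqrt_lt_R0; nra).
        assert (Hsq1 : sq <= N * M).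
        { unfold sq. rewrite <- (sqrt_pow2 (N * M)) at 2 by nra. apply sqrt_le_1_alt. assert (1 <= N * M) by nra. simpl. nra. }
        assert (H1 : delta * delta * 2 ^ d < 4 * Delta * sq).
        { assert (H' : delta / sq * (sq * 2 ^ d * delta) < 4 * (2 * s) / delta * (sq * 2 ^ d * delta)).
          { apply Rmult_lt_compat_r; [|exact Hdepth]. apply Rmult_lt_0_compat; [apply Rmult_lt_0_compat|]; lra. }
          replace (delta / sq * (sq * 2 ^ d * delta)) with (delta * delta * 2 ^ d) in H' by (field; lra).
          replace (4 * (2 * s) / delta * (sq * 2 ^ d * delta)) with (4 * Delta * sq) in H' by (rewrite Hs; field; lra).
          exact H'. }
        assert (H2 : 2 ^ d < 2 ^ 2 * X ^ 2).
        { assert (delta * (delta * 2 ^ d) < delta * (4 * X)).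
          { assert (4 * Delta * sq <= 4 * Delta * (N * M)) by nra. nra. }
          assert (delta * 2 ^ d < 4 * X) by nra.
          assert (2 ^ d <= 2 ^ d * (X * delta)) by nra.
          simpl. nra. }
        apply ln_increasing in H2; [|exact Hpw].
        rewrite ln_mult in H2 by (try apply pow_lt; lra).
        rewrite !ln_pow in H2 by lra. fold L in H2. simpl INR in H2.
        pose proof (pos_INR d). nra. }
      assert (HdJ : (d < J)%nat).
      { apply INR_lt. rewrite HJ. destruct (archimed (12 * L)). lra. }
      assert (HKb : 16 / delta <= INR K - 1) by (rewrite HK; destruct (archimed (16 / delta)); lra).
      specialize (Hnear _ Hcorner).
      assert (Hc2 : 4 * (2 * s) / delta = 8 * s / delta) by (field; lra).
      rewrite Hc2 in Hnear.
      assert (Ex := abs_le_sqrt (IZR a * s - fst (P i)) (IZR b * s - snd (P i))).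
      assert (Ey := abs_le_sqrt (IZR b * s - snd (P i)) (IZR a * s - fst (P i))).
      rewrite Rplus_comm in Ey.
      unfold Defs.dist in Hnear; cbn [fst snd] in Hnear.
      replace (Delta / 2 ^ Datatypes.S d) with s by (rewrite Hs; reflexivity).
      unfold kids. apply in_flat_map. exists i. split; [apply in_seq; lia|].
      apply in_flat_map. exists (Datatypes.S d). split; [apply in_seq; lia|].
      apply in_flat_map. exists a. split.
      + apply (coord_rng s (IZR a)); auto. lra.
      + apply in_map_iff. exists b. split; [reflexivity|]. apply (coord_rng s (IZR b)); auto. lra. }
  apply le_INR in Hlen. eapply Rle_trans; [exact Hlen|].
  rewrite plus_INR, !mult_INR. fold N M. simpl (INR 4).
  set (e := / delta).
  assert (He1 : 1 <= e) by (unfold e; rewrite <- Rinv_1; apply Rinv_le_contravar; lra).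
  assert (Hde : N * M / delta ^ 2 = N * M * e * e) by (unfold e; field; lra).
  rewrite Hde.
  assert (HJb : INR J <= 16 * L) by (rewrite HJ; destruct (archimed (12 * L)); lra).
  assert (HKu : INR K <= 18 * e).
  { rewrite HK. destruct (archimed (16 / delta)). unfold e in *. unfold Rdiv in *. lra. }
  assert (HK0 : 0 <= INR K) by apply pos_INR.
  assert (HJ0 : 0 <= INR J) by apply pos_INR.
  assert (HKK : INR K * INR K <= 324 * (e * e)) by nra.
  assert (HJKK : INR J * (INR K * INR K) <= 16 * L * (324 * (e * e))).
  { apply Rmult_le_compat; nra. }
  assert (HNe : 1 <= N * e * e) by nra.
  assert (T1 : M * (4 * 4) <= 64 * (N * M * e * e) * L).
  { assert (M <= M * (N * e * e)) by nra.
    assert (M * (N * e * e) * (1/4) <= M * (N * e * e) * L) by (apply Rmult_le_compat_l; nra).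
    replace (N * M * e * e) with (M * (N * e * e)) by ring. nra. }
  assert (T2 : N * (INR J * (INR K * INR K)) <= 5184 * (N * M * e * e) * L).
  { assert (N * (INR J * (INR K * INR K)) <= N * (16 * L * (324 * (e * e)))) by (apply Rmult_le_compat_l; lra).
    assert (0 <= N * e * e * L) by nra. nra. }
  assert (0 <= N * M * e * e * L) by nra.
  lra.
Qed.
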